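(* Let $(X,\mathcal{A})$ be a measurable space, $f,g\in\mathcal{F}_{[0,1]}^{(X,\mathcal{A})}$ comonotone, and $\star:[0,1]^2\to[0,1]$ continuous and non-decreasing in both arguments. Let $\circledast$ be a semicopula and $\alpha,\beta,\gamma,\lambda,\upsilon,\tau\in(0,\infty)$ with $\gamma\tau\ge1$ and $\beta\upsilon\ge1$. If for all $a,b,c\in[0,1]$ \[ \big[(a\star b)^{\alpha}\circledast c\big]^{\lambda}\ \ge\ \big[(a^{\beta}\circledast c)^{\upsilon}\star b\big]\vee\big[a\star(b^{\gamma}\circledast c)^{\tau}\big], \] then for every monotone measure $m$ on $(X,\mathcal{A})$ with $m(X)=1$, \[ \big[\mathbf{I}_\circledast(m,(f\star g)^{\alpha})\big]^{\lambda}\ \ge\ \big[\mathbf{I}_\circledast(m,f^{\beta})\big]^{\upsilon}\star\big[\mathbf{I}_\circledast(m,g^{\gamma})\big]^{\tau}. \]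
   Context: A monotone measure on $(X,\mathcal{A})$ is $m:\mathcal{A}\to[0,\infty]$ with $m(\emptyset)=0$, $m(X)>0$, $m(A)\le m(B)$ for $A\subseteq B$. $\mathcal{F}_{[0,1]}^{(X,\mathcal{A})}$ is the set of $\mathcal{A}$-measurable $f:X\to[0,1]$. A semicopula is a map $\circledast:[0,1]^2\to[0,1]$, non-decreasing in both components, with neutral element $1$ and $a\circledast b\le\min(a,b)$. The seminormed integral is $\mathbf{I}_\circledast(m,f)=\sup\{t\circledast m(\{f\ge t\}) : t\in[0,1]\}$. $f,g$ are comonotone if $(f(x)-f(y))(g(x)-g(y))\ge0$ for all $x,y$. Operations on functions are pointwise. *)

(* Defs.v *)
From HB Require Import structures.
From mathcomp Require Import all_boot all_order all_algebra.
From mathcomp Require Import all_classical all_reals all_analysis.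
Set Implicit Arguments. Unset Strict Implicit. Unset Printing Implicit Defensive.
Import Order.TTheory GRing.Theory Num.Theory.
Import numFieldNormedType.Exports.
Local Open Scope classical_set_scope.
Local Open Scope ring_scope.

Section Defs.
Variable R : realType.

Definition unit_int (a : R) : Prop := 0 <= a <= 1.

Definition monotone_measure (d : measure_display) (X : measurableType d)
    (m : set X -> \bar R) : Prop :=
  [/\ m set0 = 0%E,
      (0 < m setT)%E,
      (forall A, (0 <= m A)%E) &
      (forall A B, measurable A -> measurable B -> A `<=` B -> (m A <= m B)%E)].

Definition F01 (d : measure_display) (X : measurableType d) (f : X -> R) : Prop :=
  measurable_fun setT f /\ forall x, unit_int (f x).

(* semicopula on [0,1]^2 (values outside [0,1]^2 are irrelevant) *)
Definition semicopula (sc : R -> R -> R) : Prop :=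
  [/\ (forall a b, unit_int a -> unit_int b -> unit_int (sc a b)),
      (forall a a' b b', unit_int a -> unit_int a' -> unit_int b -> unit_int b' ->
          a <= a' -> b <= b' -> sc a b <= sc a' b'),
      (forall a, unit_int a -> sc 1 a = a /\ sc a 1 = a) &
      (forall a b, unit_int a -> unit_int b -> sc a b <= Num.min a b)].

Definition cont_nondecr_op (st : R -> R -> R) : Prop :=
  [/\ (forall a b, unit_int a -> unit_int b -> unit_int (st a b)),
      (forall a a' b b', unit_int a -> unit_int a' -> unit_int b -> unit_int b' ->
          a <= a' -> b <= b' -> st a b <= st a' b') &
      {within [set p : R * R | unit_int p.1 /\ unit_int p.2],
        continuous (fun p : R * R => st p.1 p.2)}].

Definition comonotone (X : Type) (f g : X -> R) : Prop :=
  forall x y, 0 <= (f x - f y) * (g x - g y).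

(* The measure value is converted to a real number with [fine]; this is
   only used for measures with m(X) = 1, whose values lie in [0,1]. *)
Definition seminormed_integral (d : measure_display) (X : measurableType d)
    (sc : R -> R -> R) (m : set X -> \bar R) (f : X -> R) : R :=
  sup [set sc t (fine (m [set x | t <= f x])) | t in [set t : R | unit_int t]].

End Defs.

(* Main.v *)
Require Import Defs.
From HB Require Import structures.
From mathcomp Require Import all_boot all_order all_algebra.
From mathcomp Require Import all_classical all_reals all_analysis.
From mathcomp Require Import lra.
Import Order.TTheory GRing.Theory Num.Theory.
Import numFieldNormedType.Exports.
Set Implicit Arguments. Unset Strict Implicit.
Local Open Scope classical_set_scope.
Local Open Scope ring_scope.

Section Helpers.
Variable R : realType.
Implicit Types (a b s t x y : R).

Lemma ui0 : unit_int (0 : R).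
Proof. by rewrite /unit_int lexx ler01. Qed.

Lemma cont_delta (st : R -> R -> R) :
  {within [set p : R * R | unit_int p.1 /\ unit_int p.2], continuous (fun p : R * R => st p.1 p.2)} ->
  forall a b, unit_int a -> unit_int b -> forall e, 0 < e ->
  exists2 d, 0 < d & forall p q, unit_int p -> unit_int q -> `|a - p| < d -> `|b - q| < d ->
     `|st a b - st p q| < e.
Proof.
move=> H a b ha hb e e0.
move: H; rewrite continuous_subspace_in => /(_ (a, b)).
rewrite in_setE => /(_ (conj ha hb)) /cvgrPdist_lt /(_ e e0).
rewrite /within /= => /nbhs_ballP [d d0 Hd].
exists d => // p q hp hq hap hbq.
apply: (Hd (p, q)).
rewrite /ball /= /subspace_ball ifT; last by rewrite in_setE.
by split.
Qed.

Lemma powle r x y : 0 <= r -> 0 <= x -> x <= y -> x `^ r <= y `^ r.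
Proof.
move=> r0 x0 xy; apply: ge0_ler_powR => //; rewrite nnegrE //.
exact: le_trans xy.
Qed.

Lemma powlt r x y : 0 < r -> 0 <= x -> x < y -> x `^ r < y `^ r.
Proof.
move=> r0 x0 xy; apply: gt0_ltr_powR => //; rewrite nnegrE //.
exact: le_trans (ltW xy).
Qed.

Lemma powle_iff r x y : 0 < r -> 0 <= x -> 0 <= y -> (x `^ r <= y `^ r) = (x <= y).
Proof.
move=> r0 x0 y0; apply/idP/idP; last exact: powle (ltW r0) x0.
by apply: contraLR; rewrite -!ltNge => /(@powlt r _ _ r0 y0).
Qed.

Lemma powK s e : 0 < e -> 0 <= s -> (s `^ e^-1) `^ e = s.
Proof. by move=> e0 s0; rewrite -powRrM mulVf ?gt_eqF // powRr1. Qed.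

Lemma powK' s e : 0 < e -> 0 <= s -> (s `^ e) `^ e^-1 = s.
Proof. by move=> e0 s0; rewrite -powRrM mulfV ?gt_eqF // powRr1. Qed.

Lemma pow_ui a r : unit_int a -> 0 <= r -> unit_int (a `^ r).
Proof.
move=> /andP[a0 a1] r0; rewrite /unit_int powR_ge0 /=.
by rewrite (le_trans (@powle r a 1 r0 a0 a1)) // powR1.
Qed.

Lemma pow_exp_le t p q : unit_int t -> 0 < p -> p <= q -> t `^ q <= t `^ p.
Proof.
move=> /andP[t0 t1] p0 pq.
have [->|tn0] := eqVneq t 0.
  by rewrite !powR0 // gt_eqF // (lt_le_trans p0 pq).
by apply: ger_powR => //; rewrite t1 andbT lt_neqAle eq_sym tn0.
Qed.

Lemma fine_ui (e : \bar R) : (0 <= e)%E -> (e <= 1)%E -> unit_int (fine e) /\ e = (fine e)%:E.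
Proof. by case: e => [r| |] //=; rewrite !lee_fin /unit_int => -> ->. Qed.

Lemma rat_approx a d : unit_int a -> 0 < d ->
  exists r : rat, [/\ unit_int (ratr r : R), ratr r <= a & a - ratr r < d].
Proof.
move=> /andP[a0 a1] d0.
have [->|an0] := eqVneq a 0.
  by exists 0%R; rewrite rmorph0 /unit_int lexx ler01 subr0.
have ap : 0 < a by rewrite lt_neqAle eq_sym an0.
have hc : Num.max 0 (a - d) < a by rewrite gt_max ap /= ltrBlDr ltrDl.
have [q] := rat_in_itvoo hc.
rewrite in_itv /= gt_max => /andP[/andP[q0 qad] qa].
exists q; split; first by rewrite /unit_int (ltW q0) (ltW (lt_le_trans qa a1)).
  exact: ltW.
by rewrite ltrBlDr -ltrBlDl.
Qed.

Lemma dist_lemma (A p dd : R) : p <= A -> A - dd < p -> `|A - p| < dd.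
Proof. move=> pA h; rewrite ger0_norm ?subr_ge0 //; lra. Qed.

Lemma final_lemma (A B K : R) : `|A - B| < A - K -> B <= K -> False.
Proof.
move=> h1 h2; have := le_lt_trans (ler_norm (A - B)) h1; lra.
Qed.

End Helpers.

Section Meas.
Variables (R : realType) (d : measure_display) (X : measurableType d).

Lemma meas_ge (f : X -> R) : measurable_fun setT f -> forall c : R, measurable [set x | c <= f x].
Proof.
move=> mf c.
suff -> : [set x | c <= f x] = setT `&` f @^-1` `[c, +oo[%classic.
  exact: mf (measurable_itv _).
by apply/seteqP; split => x /=; rewrite in_itv /= andbT //; move=> [].
Qed.

Lemma meas_star (f g : X -> R) (st : R -> R -> R) :
  F01 f -> F01 g -> cont_nondecr_op st ->
  forall v : R, measurable [set x | v <= st (f x) (g x)].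
Proof.
move=> [mf uf] [mg ug] [stu stm stc].
have lt_eq : forall w : R, [set x | w < st (f x) (g x)] =
  \bigcup_(r : rat) \bigcup_(r' : rat)
    [set x | (unit_int (ratr r : R) /\ unit_int (ratr r' : R) /\ w < st (ratr r) (ratr r'))
             /\ (ratr r <= f x /\ ratr r' <= g x)].
  move=> w; apply/seteqP; split => x /=.
    move=> hx.
    have [dd dd0 Hd] := cont_delta stc (uf x) (ug x) (ltac:(by rewrite subr_gt0) : 0 < st (f x) (g x) - w).
    have [r [ur rf fr]] := rat_approx (uf x) dd0.
    have [r' [ur' rg gr]] := rat_approx (ug x) dd0.
    exists r => //; exists r' => //; split => //; split => //; split => //.
    have e1 : `|f x - ratr r| < dd by rewrite ger0_norm ?subr_ge0.
    have e2 : `|g x - ratr r'| < dd by rewrite ger0_norm ?subr_ge0.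
    have := Hd _ _ ur ur' e1 e2.
    have := ler_norm (st (f x) (g x) - st (ratr r) (ratr r')).
    move=> h1 h2; have := le_lt_trans h1 h2. lra.
  move=> [r _ [r' _ [[ur [ur' wr]] [rf rg]]]].
  exact: lt_le_trans wr (stm _ _ _ _ ur (uf x) ur' (ug x) rf rg).
have mlt : forall w : R, measurable [set x | w < st (f x) (g x)].
  move=> w; rewrite lt_eq; apply: bigcupT_measurable_rat => r.
  apply: bigcupT_measurable_rat => r'.
  have [P|nP] := pselect (unit_int (ratr r : R) /\ unit_int (ratr r' : R) /\ w < st (ratr r) (ratr r')).
    suff -> : [set x | (unit_int (ratr r : R) /\ unit_int (ratr r' : R) /\ w < st (ratr r) (ratr r'))
             /\ (ratr r <= f x /\ ratr r' <= g x)] = [set x | ratr r <= f x] `&` [set x | ratr r' <= g x].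
      by apply: measurableI; apply: meas_ge.
    by apply/seteqP; split => x /=; [move=> [_ []] | move=> [] ].
  suff -> : [set x | (unit_int (ratr r : R) /\ unit_int (ratr r' : R) /\ w < st (ratr r) (ratr r'))
             /\ (ratr r <= f x /\ ratr r' <= g x)] = set0 by [].
  by apply/seteqP; split => x //= [].
move=> v.
suff -> : [set x | v <= st (f x) (g x)] = \bigcap_n [set x | v - n.+1%:R^-1 < st (f x) (g x)].
  exact: bigcapT_measurable.
apply/seteqP; split => x /=.
  move=> hx n _ /=; apply: lt_le_trans hx; rewrite ltrBlDr ltrDl invr_gt0 ltr0n //.
move=> H; apply/ler_addgt0Pr => e e0.
have [N _ HN] := near_infty_natSinv_lt (PosNum e0).
have := H N I; have := HN N (leqnn N); rewrite /=. move=> h1 h2; apply: ltW; rewrite -ltrBlDr; apply: le_lt_trans h2; exact: lerB (lexx v) (ltW h1).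
Qed.

End Meas.

Section Integ.
Variables (R : realType) (d : measure_display) (X : measurableType d).

Lemma m_ui (m : set X -> \bar R) : monotone_measure m -> m setT = 1%E ->
  forall A, measurable A -> unit_int (fine (m A)) /\ m A = (fine (m A))%:E.
Proof.
move=> [_ _ m0 mmon] mT A mA; apply: fine_ui => //.
by rewrite -mT; apply: mmon.
Qed.

Lemma level_pow (k : X -> R) e t : 0 < e -> 0 <= t -> (forall x, 0 <= k x) ->
  [set x | t <= k x `^ e] = [set x | t `^ e^-1 <= k x].
Proof.
move=> e0 t0 k0.
have E : forall x, (t <= k x `^ e) = (t `^ e^-1 <= k x).
  by move=> x; rewrite -{1}(powK e0 t0) powle_iff ?powR_ge0.
by apply/seteqP; split => x /=; rewrite E.
Qed.

Lemma nest (f g : X -> R) a b : comonotone f g ->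
  [set x | a <= f x] `<=` [set x | b <= g x] \/ [set x | b <= g x] `<=` [set x | a <= f x].
Proof.
move=> co; have [[x [fx ngx]]|nex] := pselect (exists x, a <= f x /\ ~ (b <= g x)).
  right => y /= gy.
  have gxy : g x - g y < 0.
    by rewrite subr_lt0; apply: lt_le_trans gy; rewrite ltNge; apply/negP.
  have := co x y => cxy.
  have : f x - f y <= 0 by nra.
  by rewrite subr_le0 => h; exact: le_trans fx h.
by left => x /= fx; apply: contrapT => ngx; apply: nex; exists x; split.
Qed.

Variables (sc : R -> R -> R) (m : set X -> \bar R).
Hypotheses (scs : semicopula sc) (mm : monotone_measure m) (mT : m setT = 1%E).

Section K.
Variable k : X -> R.
Hypothesis lv : forall t, unit_int t -> measurable [set x | t <= k x].

Let S := [set sc t (fine (m [set x | t <= k x])) | t in [set t : R | unit_int t]].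

Lemma S_ui y : S y -> unit_int y.
Proof.
case: scs => scu _ _ _ [t ht <-]; apply: scu => //.
exact: (m_ui mm mT (lv ht)).1.
Qed.

Lemma S_has_sup : has_sup S.
Proof.
split; first by exists (sc 0 (fine (m [set x | 0 <= k x]))); exists 0 => //; exact: ui0.
by exists 1 => y /S_ui /andP[].
Qed.

Lemma SI_ui : unit_int (seminormed_integral sc m k).
Proof.
rewrite /seminormed_integral -/S.
have [[y Sy] _] := S_has_sup.
apply/andP; split.
  by apply: le_trans (sup_upper_bound S_has_sup Sy); case/andP: (S_ui Sy).
by apply: ge_sup; [exists y | move=> z /S_ui /andP[]].
Qed.

Lemma SI_ub t : unit_int t -> sc t (fine (m [set x | t <= k x])) <= seminormed_integral sc m k.
Proof.
move=> ht; rewrite /seminormed_integral -/S.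
by apply: (sup_upper_bound S_has_sup); exists t.
Qed.

Lemma SI_approx u dl : 0 < u -> 0 < dl -> exists t, unit_int t /\
  (seminormed_integral sc m k) `^ u - dl < (sc t (fine (m [set x | t <= k x]))) `^ u.
Proof.
move=> u0 dl0.
have /andP[P0 P1] := SI_ui.
move: P0 P1; rewrite /seminormed_integral -/S => P0 P1.
set P := sup S.
have [neg|w0] := ltrP (P `^ u - dl) 0.
  exists 0; split; first exact: ui0.
  exact: lt_le_trans neg (powR_ge0 _ _).
set w := P `^ u - dl.
set z := w `^ u^-1.
have z0 : 0 <= z by exact: powR_ge0.
have zP : z < P.
  rewrite ltNge; apply/negP => Pz.
  have := powle (ltW u0) P0 Pz; rewrite /z powK //.
  rewrite /w; lra.
have [y Sy hy] := sup_adherent (ltac:(by rewrite subr_gt0) : 0 < P - z) S_has_sup.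
have zy : z < y by move: hy; rewrite opprB addrCA subrr addr0.
case: Sy zy => t ht <- zy.
exists t; split => //.
have := powlt u0 z0 zy; rewrite /z powK //.
Qed.

End K.
End Integ.

Unset Implicit Arguments.

Theorem corollary3p13 (R : realType) (d : measure_display) (X : measurableType d)
    (f g : X -> R) (star sc : R -> R -> R)
    (alpha beta gamma lambda upsilon tau : R) :
  F01 f -> F01 g -> comonotone f g ->
  cont_nondecr_op star -> semicopula sc ->
  0 < alpha -> 0 < beta -> 0 < gamma -> 0 < lambda -> 0 < upsilon -> 0 < tau ->
  1 <= gamma * tau -> 1 <= beta * upsilon ->
  (forall a b c : R, unit_int a -> unit_int b -> unit_int c ->
     Num.max (star ((sc (a `^ beta) c) `^ upsilon) b)
             (star a ((sc (b `^ gamma) c) `^ tau))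
     <= (sc ((star a b) `^ alpha) c) `^ lambda) ->
  forall m : set X -> \bar R, monotone_measure m -> m setT = 1%E ->
    star ((seminormed_integral sc m (fun x => f x `^ beta)) `^ upsilon)
         ((seminormed_integral sc m (fun x => g x `^ gamma)) `^ tau)
    <= (seminormed_integral sc m (fun x => (star (f x) (g x)) `^ alpha)) `^ lambda.
Proof.
move=> Ff Fg como stop scs al0 be0 ga0 la0 up0 ta0 gt1 bu1 Hyp m mm mT.
have [mf uf] := Ff; have [mg ug] := Fg.
have [stu stm stc] := stop.
have [scu scm sc1 scmin] := scs.
have mmon : forall A B, measurable A -> measurable B -> A `<=` B -> (m A <= m B)%E.
  by case: mm.
have mfl := meas_ge mf; have mgl := meas_ge mg.
have mhl := meas_star Ff Fg stop.
have f0 : forall x, 0 <= f x by move=> x; case/andP: (uf x).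
have g0 : forall x, 0 <= g x by move=> x; case/andP: (ug x).
have h0 : forall x, 0 <= star (f x) (g x) by move=> x; case/andP: (stu _ _ (uf x) (ug x)).
have lvF : forall t, unit_int t -> measurable [set x | t <= f x `^ beta].
  by move=> t /andP[t0 _]; rewrite level_pow //; exact: mfl.
have lvG : forall t, unit_int t -> measurable [set x | t <= g x `^ gamma].
  by move=> t /andP[t0 _]; rewrite level_pow //; exact: mgl.
have lvH : forall t, unit_int t -> measurable [set x | t <= star (f x) (g x) `^ alpha].
  by move=> t /andP[t0 _]; rewrite level_pow //; exact: mhl.
set IH := seminormed_integral sc m (fun x => star (f x) (g x) `^ alpha).
have uIH : unit_int IH := SI_ui scs mm mT lvH.
have IHge : forall u A, unit_int u -> measurable A ->
    A `<=` [set x | u <= star (f x) (g x) `^ alpha] -> sc u (fine (m A)) <= IH.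
  move=> u A hu mA AH.
  have [uA eA] := m_ui mm mT mA.
  have [uH eH] := m_ui mm mT (lvH u hu).
  apply: le_trans (SI_ub scs mm mT lvH hu).
  apply: scm => //; try exact: lexx.
  by rewrite -lee_fin -eA -eH; apply: mmon => //; exact: lvH.
have bi0 : 0 < beta^-1 by rewrite invr_gt0.
have gi0 : 0 < gamma^-1 by rewrite invr_gt0.
have ginv : gamma^-1 <= tau by rewrite -(ler_pM2l ga0) mulfV ?gt_eqF.
have binv : beta^-1 <= upsilon by rewrite -(ler_pM2l be0) mulfV ?gt_eqF.
have key : forall s t, unit_int s -> unit_int t ->
  star ((sc s (fine (m [set x | s <= f x `^ beta]))) `^ upsilon)
       ((sc t (fine (m [set x | t <= g x `^ gamma]))) `^ tau) <= IH `^ lambda.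
  move=> s t hs ht.
  have s0 : 0 <= s by case/andP: hs.
  have t0 : 0 <= t by case/andP: ht.
  rewrite (level_pow be0 s0 f0) (level_pow ga0 t0 g0).
  set a := s `^ beta^-1; set b := t `^ gamma^-1.
  have ua : unit_int a := pow_ui hs (ltW bi0).
  have ub : unit_int b := pow_ui ht (ltW gi0).
  have [ucF eF] := m_ui mm mT (mfl a).
  have [ucG eG] := m_ui mm mT (mgl b).
  set cF := fine (m [set x | a <= f x]).
  set cG := fine (m [set x | b <= g x]).
  have hsa : a `^ beta = s := powK be0 s0.
  have htb : b `^ gamma = t := powK ga0 t0.
  set u := star a b `^ alpha.
  have uu : unit_int u := pow_ui (stu _ _ ua ub) (ltW al0).
  have ab0 : 0 <= star a b by case/andP: (stu _ _ ua ub).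
  have pF : unit_int ((sc s cF) `^ upsilon) := pow_ui (scu _ _ hs ucF) (ltW up0).
  have pG : unit_int ((sc t cG) `^ tau) := pow_ui (scu _ _ ht ucG) (ltW ta0).
  have hmax := Hyp a b _ ua ub.
  case: (nest a b como) => [FG|GF].
  - have := hmax _ ucF; rewrite ge_max hsa => /andP[H1 _].
    have Hu : sc u cF <= IH.
      apply: IHge => // x /= Fx; apply: powle (ltW al0) ab0 _.
      exact: stm _ _ _ _ ua (uf x) ub (ug x) Fx (FG x Fx).
    have Hl : (sc u cF) `^ lambda <= IH `^ lambda.
      by apply: powle (ltW la0) _ Hu; case/andP: (scu _ _ uu ucF).
    apply: le_trans (le_trans H1 Hl).
    apply: stm => //; try exact: lexx.
    apply: le_trans (pow_exp_le ht gi0 ginv).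
    apply: powle (ltW ta0) _ _; first by case/andP: (scu _ _ ht ucG).
    by apply: le_trans (scmin _ _ ht ucG) _; rewrite ge_min lexx.
  - have := hmax _ ucG; rewrite ge_max htb => /andP[_ H2].
    have Hu : sc u cG <= IH.
      apply: IHge => // x /= Gx; apply: powle (ltW al0) ab0 _.
      exact: stm _ _ _ _ ua (uf x) ub (ug x) (GF x Gx) Gx.
    have Hl : (sc u cG) `^ lambda <= IH `^ lambda.
      by apply: powle (ltW la0) _ Hu; case/andP: (scu _ _ uu ucG).
    apply: le_trans (le_trans H2 Hl).
    apply: stm => //; try exact: lexx.
    apply: le_trans (pow_exp_le hs bi0 binv).
    apply: powle (ltW up0) _ _; first by case/andP: (scu _ _ hs ucF).
    by apply: le_trans (scmin _ _ hs ucF) _; rewrite ge_min lexx.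
set IF := seminormed_integral sc m (fun x => f x `^ beta).
set IG := seminormed_integral sc m (fun x => g x `^ gamma).
have uIF : unit_int IF := SI_ui scs mm mT lvF.
have uIG : unit_int IG := SI_ui scs mm mT lvG.
rewrite leNgt; apply/negP => Hlt.
have [dd dd0 Hd] := cont_delta stc (pow_ui uIF (ltW up0)) (pow_ui uIG (ltW ta0))
  (ltac:(by rewrite subr_gt0) : 0 < star (IF `^ upsilon) (IG `^ tau) - IH `^ lambda).
have [s [hs Hs]] := SI_approx scs mm mT lvF up0 dd0.
have [t [ht Ht]] := SI_approx scs mm mT lvG ta0 dd0.
set cF := fine (m [set x | s <= f x `^ beta]) in Hs key.
set cG := fine (m [set x | t <= g x `^ gamma]) in Ht key.
have [ucF _] := m_ui mm mT (lvF s hs).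
have [ucG _] := m_ui mm mT (lvG t ht).
have pF : unit_int ((sc s cF) `^ upsilon) := pow_ui (scu _ _ hs ucF) (ltW up0).
have pG : unit_int ((sc t cG) `^ tau) := pow_ui (scu _ _ ht ucG) (ltW ta0).
have leF : (sc s cF) `^ upsilon <= IF `^ upsilon.
  by apply: powle (ltW up0) _ (SI_ub scs mm mT lvF hs); case/andP: (scu _ _ hs ucF).
have leG : (sc t cG) `^ tau <= IG `^ tau.
  by apply: powle (ltW ta0) _ (SI_ub scs mm mT lvG ht); case/andP: (scu _ _ ht ucG).
have e1 := dist_lemma leF Hs.
have e2 := dist_lemma leG Ht.
have H3 := Hd _ _ pF pG e1 e2.
exact: final_lemma H3 (key s t hs ht).
Qed.
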